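(* Let $G$ be a vigorous subgroup of $\operatorname{Homeo}(\mathfrak{C})$ generated by its elements of small support. Let $B,C,D\in K_{\mathfrak{C}}$ be pairwise disjoint with $B\cup C\cup D=\mathfrak{C}$. Let $\delta\in\operatorname{pstab}_G(D)$ satisfy $B\delta\subsetneq B$. Let $\varepsilon:\mathfrak{C}\to\mathfrak{C}$ be the injective map agreeing with $\delta$ on $B$ and equal to the identity on $C\cup D$. Let $f:\operatorname{Homeo}(\mathfrak{C})\to\operatorname{Homeo}(\mathfrak{C})$ send $\gamma$ to the homeomorphism which, for $p\in\mathfrak{C}\varepsilon$, maps $p$ to $((p\varepsilon^{-1})\gamma)\varepsilon$, and fixes every point of $\mathfrak{C}\setminus\mathfrak{C}\varepsilon$. Then $f|_G$ is an isomorphism from $G$ onto $\operatorname{pstab}_G(\mathfrak{C}\setminus\mathfrak{C}\varepsilon)$.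
   Context: $\mathfrak{C}$ denotes a Cantor space (a space homeomorphic to $\{0,1\}^\omega$). Groups of homeomorphisms act on the right, and products are composed left to right. $K_{\mathfrak{C}}$ denotes the set of non-empty proper clopen subsets of $\mathfrak{C}$. For $\gamma\in\operatorname{Homeo}(\mathfrak{C})$, $\operatorname{supp}(\gamma)=\{p\in\mathfrak{C}: p\gamma\neq p\}$. For $G\le\operatorname{Homeo}(\mathfrak{C})$ and $A\subseteq\mathfrak{C}$, $\operatorname{pstab}_G(A)=\{g\in G: pg=p \text{ for all } p\in A\}$. A subset $S\subseteq \operatorname{Homeo}(\mathfrak{C})$ is vigorous if for all clopen $A,B,C\subseteq\mathfrak{C}$ with $B,C$ non-empty proper subsets of $A$ there is $\gamma\in S$ with $\operatorname{supp}(\gamma)\subseteq A$ and $B\gamma\subseteq C$. $G$ is generated by its elements of small support if $G$ is generated by $\{\gamma\in G: \operatorname{supp}(\gamma)\subseteq A \text{ for some } A\in K_{\mathfrak{C}}\}$. *)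

(* Defs.v *)
From HB Require Import structures.
From mathcomp Require Import all_boot all_order all_algebra.
From mathcomp Require Import all_classical all_reals all_analysis.
Set Implicit Arguments. Unset Strict Implicit. Unset Printing Implicit Defensive.
Local Open Scope classical_set_scope.

Notation CC := cantor_space.

Definition is_homeo (g : CC -> CC) : Prop :=
  continuous g /\ exists h : CC -> CC, continuous h /\ cancel g h /\ cancel h g.

(* Right actions, products composed left to right: p (g * h) = (p g) h. *)
Definition hmul (g h : CC -> CC) : CC -> CC := h \o g.

Definition is_subgroup (G : set (CC -> CC)) : Prop :=
  [/\ G `<=` is_homeo, G id,
      (forall g h, G g -> G h -> G (hmul g h)) &
      (forall g h, G g -> cancel g h -> cancel h g -> G h)].

Definition KC (A : set CC) : Prop := clopen A /\ A !=set0 /\ A != setT.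

Definition supp (g : CC -> CC) : set CC := [set p | g p <> p].

Definition pstab (G : set (CC -> CC)) (A : set CC) : set (CC -> CC) :=
  [set g | G g /\ forall p, A p -> g p = p].

Definition vigorous (S : set (CC -> CC)) : Prop :=
  forall A B C : set CC, clopen A -> clopen B -> clopen C ->
    B !=set0 -> C !=set0 -> B `<` A -> C `<` A ->
    exists2 g, S g & supp g `<=` A /\ g @` B `<=` C.

Definition small_support_elts (G : set (CC -> CC)) : set (CC -> CC) :=
  [set g | G g /\ exists A, KC A /\ supp g `<=` A].

Definition gen_by_small_support (G : set (CC -> CC)) : Prop :=
  forall H, is_subgroup H -> small_support_elts G `<=` H -> G `<=` H.

(* Main.v *)
Require Import Defs.
From HB Require Import structures.
From mathcomp Require Import all_boot all_order all_algebra.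
From mathcomp Require Import all_classical all_reals all_analysis.
Local Open Scope classical_set_scope.
Set Implicit Arguments. Unset Strict Implicit.

Lemma disjP (S T : set CC) : S `&` T = set0 -> forall p, S p -> T p -> False.
Proof. by move=> H p Sp Tp; have h : (S `&` T) p := conj Sp Tp; rewrite H in h. Qed.

Lemma subgroup_inv G g : is_subgroup G -> G g ->
  exists gi, [/\ G gi, continuous gi, cancel g gi & cancel gi g].
Proof.
move=> [HH H1 HM HI] Gg; have [_ [gi [cgi [c1 c2]]]] := HH _ Gg.
by exists gi; split => //; apply: (HI g).
Qed.

Lemma preserve (A : set CC) g gi : cancel g gi ->
  (forall p, ~ A p -> g p = p) -> forall p, A p -> A (g p).
Proof.
move=> c fix0 p Ap; case: (pselect (A (g p))) => // nA.
have := fix0 _ nA => e; have : g p = p by apply: (can_inj c).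
by move=> e'; rewrite e'.
Qed.

Lemma supp_fix (A : set CC) g : supp g `<=` A -> forall p, ~ A p -> g p = p.
Proof.
move=> s p nA; case: (pselect (g p = p)) => // ne; by case: nA; apply: s.
Qed.

Lemma f_id (eps : CC -> CC) (f : (CC -> CC) -> (CC -> CC))
  (hf1 : forall g q, f g (eps q) = eps (g q))
  (hf2 : forall g p, ~ range eps p -> f g p = p) : f id = id.
Proof.
apply: funext => p; case: (pselect (range eps p)) => [[q _ <-]|np].
  by rewrite hf1. by rewrite hf2.
Qed.

Lemma f_mul (eps : CC -> CC) (f : (CC -> CC) -> (CC -> CC))
  (hf1 : forall g q, f g (eps q) = eps (g q))
  (hf2 : forall g p, ~ range eps p -> f g p = p) g h :
  f (hmul g h) = hmul (f g) (f h).
Proof.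
apply: funext => p; case: (pselect (range eps p)) => [[q _ <-]|np].
  by rewrite /hmul /= !hf1.
by rewrite /hmul /= !hf2.
Qed.

Lemma f_agree (eps : CC -> CC) (f : (CC -> CC) -> (CC -> CC))
  (hf1 : forall g q, f g (eps q) = eps (g q))
  (hf2 : forall g p, ~ range eps p -> f g p = p) (epsinj : injective eps)
  (A : set CC) u ui g gi : cancel u ui -> cancel ui u ->
  (forall q, A q -> u q = eps q) -> (forall p, ~ A p -> g p = p) ->
  cancel g gi -> f g = u \o g \o ui.
Proof.
move=> cu cui uA gfix cg.
apply: funext => p; case: (pselect (range eps p)) => [[q _ <-]|np].
  rewrite hf1 /=; case: (pselect (A q)) => Aq.
    have Agq := preserve cg gfix Aq.
    by rewrite -(uA _ Aq) cu uA.
  have nA : ~ A (ui (eps q)).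
    move=> Aa; apply: Aq; have := uA _ Aa; by rewrite cui => /epsinj ->.
  by rewrite (gfix _ nA) cui (gfix _ Aq).
have nA : ~ A (ui p).
  by move=> Aa; apply: np; exists (ui p) => //; rewrite -uA // cui.
by rewrite hf2 //= (gfix _ nA) cui.
Qed.

Lemma f_inv (eps : CC -> CC) (f : (CC -> CC) -> (CC -> CC))
  (hf1 : forall g q, f g (eps q) = eps (g q))
  (hf2 : forall g p, ~ range eps p -> f g p = p) g gi :
  cancel g gi -> cancel gi g -> cancel (f g) (f gi) /\ cancel (f gi) (f g).
Proof.
move=> c1 c2; split => p.
  have := congr1 (fun k => k p) (f_mul hf1 hf2 g gi).
  rewrite /hmul /= => <-.
  have -> : gi \o g = id by apply: funext => x; rewrite /= c1.
  by rewrite (f_id hf1 hf2).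
have := congr1 (fun k => k p) (f_mul hf1 hf2 gi g).
rewrite /hmul /= => <-.
have -> : g \o gi = id by apply: funext => x; rewrite /= c2.
by rewrite (f_id hf1 hf2).
Qed.

Lemma clC (A : set CC) : clopen A -> clopen (~` A).
Proof. exact: (@clopenC _ A A). Qed.

Lemma imgP (g : CC -> CC) (A : set CC) p : A p -> (g @` A) (g p).
Proof. by move=> Ap; exists p. Qed.

Lemma part1
  (G : set (CC -> CC)) (B C D : set CC) (delta eps : CC -> CC)
  (f : (CC -> CC) -> (CC -> CC)) :
  is_subgroup G -> vigorous G -> gen_by_small_support G ->
  KC B -> KC C -> KC D ->
  B `&` C = set0 -> B `&` D = set0 -> C `&` D = set0 ->
  B `|` C `|` D = setT ->
  pstab G D delta -> delta @` B `<` B ->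
  (forall p, B p -> eps p = delta p) ->
  (forall p, (C `|` D) p -> eps p = p) ->
  (forall g q, f g (eps q) = eps (g q)) ->
  (forall g p, ~ range eps p -> f g p = p) ->
  injective eps /\ forall g, G g -> G (f g).
Proof.
move=> sG vig gen KB KC' KD dBC dBD dCD cov pd dprop epsB epsCD hf1 hf2.
have disBC := disjP dBC; have disBD := disjP dBD; have disCD := disjP dCD.
have cover p : B p \/ C p \/ D p.
  have : (B `|` C `|` D) p by rewrite cov.
  by case=> [[?|?]|?]; tauto.
have [Gd dfixD] := pd.
have [di [Gdi cdi cd1 cd2]] := subgroup_inv sG Gd.
have [dBsub dBne] := dprop.
have dB p : B p -> B (delta p) by move=> Bp; apply: (dBsub); exists p.
have epsinj : injective eps.
  move=> p q e.
  have nBCD x : ~ B x -> (C `|` D) x by move=> nB; case: (cover x) => [//|[?|?]]; [left|right].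
  case: (pselect (B p)) => Bp; case: (pselect (B q)) => Bq.
  - by apply: (can_inj cd1); rewrite -epsB // -epsB.
  - by exfalso; move: (epsCD q (nBCD _ Bq)); rewrite -e epsB // => e'; apply: Bq; rewrite -e'; apply: (dB).
  - by exfalso; move: (epsCD p (nBCD _ Bp)); rewrite e epsB // => e'; apply: Bp; rewrite -e'; apply: (dB).
  - by rewrite -(epsCD p (nBCD _ Bp)) -(epsCD q (nBCD _ Bq)).
split => //.
have [sH s1 sM sI] := sG.
have G3 a b c : G a -> G b -> G c -> G (c \o b \o a).
  move=> Ga Gb Gc; have -> : c \o b \o a = hmul (hmul a b) c by [].
  by apply: (sM); [apply: (sM)|].
pose Y := C `|` D. pose X := B `|` D.
have epsX q : X q -> delta q = eps q.
  case=> [Bq|Dq]; first by rewrite epsB.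
  by rewrite dfixD // epsCD //; right.
have suppY g : G g -> (forall p, ~ Y p -> g p = p) -> f g = g.
  move=> Gg gfix; have [gi [_ _ cg _]] := subgroup_inv sG Gg.
  by rewrite (f_agree hf1 hf2 epsinj (A := Y) (u := id) (ui := id) (gi := gi)) //
     => q Yq; rewrite epsCD.
have suppX g : G g -> (forall p, ~ X p -> g p = p) -> f g = delta \o g \o di.
  move=> Gg gfix; have [gi [_ _ cg _]] := subgroup_inv sG Gg.
  by rewrite (f_agree hf1 hf2 epsinj (A := X) (u := delta) (ui := di) (gi := gi)).
pose H1 := fun g => G g /\ G (f g).
have isH1 : is_subgroup H1.
  split.
  - by move=> g [Gg _]; apply: sH.
  - by split => //; rewrite (f_id hf1 hf2).
  - move=> g h [Gg Gfg] [Gh Gfh]; split; first exact: sM.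
    by rewrite (f_mul hf1 hf2); apply: (sM).
  - move=> g h [Gg Gfg] c1 c2; split; first exact: (sI g).
    have [c3 c4] := f_inv hf1 hf2 c1 c2; exact: (sI (f g)).
have H1M g h : H1 g -> H1 h -> H1 (hmul g h) by case: isH1 => _ _ hm _; apply: hm.
have H1Y g : G g -> (forall p, ~ Y p -> g p = p) -> H1 g.
  by move=> Gg gf; split => //; rewrite suppY.
have H1X g : G g -> (forall p, ~ X p -> g p = p) -> H1 g.
  move=> Gg gf; split => //; rewrite suppX //.
  have -> : delta \o g \o di = hmul (hmul di g) delta by [].
  by apply: (sM); [apply: (sM)|].
have conjH1 t ti g : cancel t ti -> cancel ti t -> H1 t -> H1 ti ->
    H1 (ti \o g \o t) -> H1 g.
  move=> c1 c2 Ht Hti Hc.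
  have -> : g = hmul (hmul ti (ti \o g \o t)) t.
    by apply: funext => p; rewrite /hmul /= c2 c2.
  by apply: (H1M) => //; apply: (H1M).
have small : small_support_elts G `<=` H1.
  move=> g [Gg [A [[clA [neA nTA]] sA]]].
  have gfix := supp_fix sA.
  have [d Dd] := KD.2.1.
  have clY : clopen Y by apply: clopenU; [exact: KC'.1|exact: KD.1].
  have clX : clopen X by apply: clopenU; [exact: KB.1|exact: KD.1].
  case: (pselect (exists p, ~ A p /\ Y p)) => [[p0 [nAp0 Yp0]]|noAY].
    case: (pselect (Y `<=` ~` A)) => [YA|nYA].
      apply: (H1X) => // p nX; apply: (gfix) => Ap.
      have Cp : C p by case: (cover p) => [?|[?|?]]; [case: nX; left|done|case: nX; right].
      by apply: (YA p) => //; left.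
    have [t Gt [st tCT]] := vig Y C (~` A `&` Y) clY KC'.1 (clopenI (clC clA) clY)
      KC'.2.1 (ex_intro _ p0 (conj nAp0 Yp0))
      (conj (fun x Cx => or_introl Cx) (fun YC => disCD d (YC d (or_intror Dd)) Dd))
      (conj (fun x (h : (~` A `&` Y) x) => proj2 h)
            (fun YT => nYA (fun x Yx => proj1 (YT x Yx)))).
    have tfix := supp_fix st.
    have [ti [Gti _ c1 c2]] := subgroup_inv sG Gt.
    apply: (conjH1 t ti) => //.
    - exact: H1Y.
    - apply: (H1Y) => // p nY; by rewrite -{1}(tfix p nY) c1.
    - apply: (H1X); first exact: G3.
      move=> p nX.
      have Cp : C p by case: (cover p) => [?|[?|?]]; [case: nX; left|done|case: nX; right].
      have [nA _] := tCT _ (imgP t Cp).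
      by rewrite /= (gfix _ nA) c1.
  have nAB p : ~ A p -> B p.
    move=> nAp; case: (cover p) => [//|YP]; exfalso; apply: noAY; exists p; split => //.
  have [a nAa] := (setTPn A).1 nTA.
  have [t Gt [st tBA]] := vig X B (~` A) clX KB.1 (clC clA)
      KB.2.1 (ex_intro _ a nAa)
      (conj (fun x Bx => or_introl Bx) (fun (XB : X `<=` B) => disBD d (XB d (or_intror Dd)) Dd))
      (conj (fun x h => or_introl (nAB x h))
            (fun (XA : X `<=` ~` A) => disBD d (nAB d (XA d (or_intror Dd))) Dd)).
  have tfix := supp_fix st.
  have [ti [Gti _ c1 c2]] := subgroup_inv sG Gt.
  apply: (conjH1 t ti) => //.
  - exact: H1X.
  - apply: (H1X) => // p nX; by rewrite -{1}(tfix p nX) c1.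
  - apply: (H1Y); first exact: G3.
    move=> p nY.
    have Bp : B p by case: (cover p) => [//|[?|?]]; case: nY; [left|right].
    have nA := tBA _ (imgP t Bp).
    by rewrite /= (gfix _ nA) c1.
move=> g Gg; have := gen H1 isH1 small g Gg; by case.
Qed.

Lemma imgE (d di : CC -> CC) (S : set CC) : cancel d di -> cancel di d ->
  d @` S = di @^-1` S.
Proof.
move=> c1 c2; apply/seteqP; split => p.
  by case=> q Sq <-; rewrite /preimage /= c1.
by move=> Sp; exists (di p) => //; rewrite c2.
Qed.

Lemma part3
  (G : set (CC -> CC)) (B C D : set CC) (delta eps : CC -> CC)
  (f : (CC -> CC) -> (CC -> CC)) :
  is_subgroup G -> vigorous G -> gen_by_small_support G ->
  KC B -> KC C -> KC D ->
  B `&` C = set0 -> B `&` D = set0 -> C `&` D = set0 ->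
  B `|` C `|` D = setT ->
  pstab G D delta -> delta @` B `<` B ->
  (forall p, B p -> eps p = delta p) ->
  (forall p, (C `|` D) p -> eps p = p) ->
  (forall g q, f g (eps q) = eps (g q)) ->
  (forall g p, ~ range eps p -> f g p = p) ->
  forall h, pstab G (~` range eps) h -> exists2 g, G g & f g = h.
Proof.
move=> sG vig gen KB KC' KD dBC dBD dCD cov pd dprop epsB epsCD hf1 hf2.
have [epsinj fG] := part1 sG vig gen KB KC' KD dBC dBD dCD cov pd dprop epsB epsCD hf1 hf2.
have disBC := disjP dBC; have disBD := disjP dBD; have disCD := disjP dCD.
have cover p : B p \/ C p \/ D p.
  have : (B `|` C `|` D) p by rewrite cov.
  by case=> [[?|?]|?]; tauto.
have nBCD x : ~ B x -> (C `|` D) x by move=> nB; case: (cover x) => [//|[?|?]]; [left|right].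
have [Gd dfixD] := pd.
have [di [Gdi cdi cd1 cd2]] := subgroup_inv sG Gd.
have [dBsub dBne] := dprop.
have dB p : B p -> B (delta p) by move=> Bp; apply: (dBsub); exists p.
have [sH s1 sM sI] := sG.
have G3 a b c : G a -> G b -> G c -> G (c \o b \o a).
  move=> Ga Gb Gc; have -> : c \o b \o a = hmul (hmul a b) c by [].
  by apply: (sM); [apply: (sM)|].
pose R := range eps.
have epsBq q : B (eps q) -> B q.
  move=> Be; case: (pselect (B q)) => // nB; exfalso.
  by move: Be; rewrite epsCD; [|exact: nBCD].
have stepA h' (E : set CC) : G h' -> (forall p, ~ R p -> h' p = p) -> clopen E ->
    (exists q, E (eps q)) -> (exists q, ~ E (eps q)) ->
    (forall p, E p -> h' p = p) -> exists2 g, G g & f g = h'.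
  move=> Gh' h'fix clE [q1 Eq1] [q0 nEq0] h'E.
  pose E' := eps @^-1` E.
  have cdelta : continuous delta by have [] := sH _ Gd.
  have clE' : clopen E'.
    have -> : E' = (B `&` delta @^-1` E) `|` (~` B `&` E).
      apply/seteqP; split => q.
        rewrite /E' /preimage /=; case: (pselect (B q)) => Bq.
          by rewrite epsB // => ?; left.
        by rewrite epsCD //; [move=> ?; right | exact: nBCD].
      case=> [[Bq Ed]|[nB Eq]]; rewrite /E' /preimage /=.
        by rewrite epsB.
      by rewrite epsCD //; exact: nBCD.
    apply: clopenU; apply: clopenI.
    - exact: KB.1.
    - exact: preimage_clopen.
    - exact: clC KB.1.
    - exact: clE.
  have [b0 nBb0] := (setTPn B).1 KB.2.2.
  have [g Gg [_ gBE]] := vig setT B E' clopenT KB.1 clE' KB.2.1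
    (ex_intro _ q1 Eq1) (conj (fun _ _ => I) (fun TB => nBb0 (TB b0 I)))
    (conj (fun _ _ => I) (fun TE => nEq0 (TE q0 I))).
  have [gi [Ggi _ cg1 cg2]] := subgroup_inv sG Gg.
  have [ca1 ca2] := f_inv hf1 hf2 cg1 cg2.
  have Ga := fG g Gg; have Gai := fG gi Ggi.
  pose k := f gi \o h' \o f g.
  have Gk : G k by exact: G3.
  have kfix p : ~ (C `|` D) p -> k p = p.
    move=> nY; rewrite /k /=.
    case: (pselect (R p)) => [[q _ ep]|nR].
      have Bq : B q.
        apply: epsBq; rewrite ep; case: (cover p) => [//|CD]; exfalso; apply: nY.
        by case: CD; [left|right].
      rewrite -ep hf1 h'E; first by rewrite -hf1 ca1.
      exact: (gBE (g q) (imgP g Bq)).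
    by rewrite (hf2 _ _ nR) h'fix // hf2.
  have [ki [_ _ ck1 _]] := subgroup_inv sG Gk.
  have fk : f k = k.
    by rewrite (f_agree hf1 hf2 epsinj (A := C `|` D) (u := id) (ui := id) (gi := ki))
       // => q Yq; rewrite epsCD.
  exists (hmul (hmul gi k) g); first by apply: (sM); [apply: (sM)|].
  rewrite (f_mul hf1 hf2 (hmul gi k) g) (f_mul hf1 hf2 gi k) fk; apply: funext => p.
  by rewrite /hmul /k /= !ca2.
move=> h [Gh hfix].
have [hi [Ghi chi ch1 ch2]] := subgroup_inv sG Gh.
have ch : continuous h by have [] := sH _ Gh.
have hR : forall p, R p -> R (h p) := preserve ch1 hfix.
have hifix p : ~ R p -> hi p = p by move=> nR; rewrite -{1}(hfix p nR) ch1.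
pose dB' := delta @` B.
have cldB : clopen dB' by rewrite /dB' (imgE B cd1 cd2); exact: preimage_clopen KB.1 cdi.
pose W := B `&` ~` dB'.
have clW : clopen W by apply: clopenI; [exact: KB.1|exact: clC].
have NRW p : ~ R p <-> W p.
  split.
    move=> nR; split.
      case: (cover p) => // CD; exfalso; apply: nR; exists p => //.
      by rewrite epsCD.
    by case=> q Bq e; apply: nR; exists q => //; rewrite epsB.
  case=> Bp ndB [q _ e]; apply: ndB.
  have Bq : B q by apply: epsBq; rewrite e.
  by exists q => //; rewrite -epsB.
have [w [Bw nw]] : exists w, B w /\ ~ dB' w.
  apply: contrapT => H; apply: dBne => x Bx; apply: contrapT => n.
  by apply: H; exists x.
pose Q1 := delta @` W. pose Q2 := delta @` dB'.
have clQ1 : clopen Q1 by rewrite /Q1 (imgE W cd1 cd2); exact: preimage_clopen clW cdi.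
have clQ2 : clopen Q2 by rewrite /Q2 (imgE dB' cd1 cd2); exact: preimage_clopen cldB cdi.
have Q1B p : Q1 p -> B p by case=> q [Bq _] <-; exact: dB.
have Q2B p : Q2 p -> B p by case=> q [b Bb <-] <-; exact: dB _ (dB _ Bb).
have Q1R p : Q1 p -> R p by case=> q [Bq _] <-; exists q => //; rewrite epsB.
have Q2R p : Q2 p -> R p.
  by case=> q [b Bb <-] <-; exists (delta b) => //; rewrite epsB //; exact: dB.
have CR p : C p -> R p by move=> Cp; exists p => //; rewrite epsCD //; left.
have DR p : D p -> R p by move=> Dp; exists p => //; rewrite epsCD //; right.
have Rblocks p : R p -> Q1 p \/ Q2 p \/ C p \/ D p.
  case=> q _ <-; case: (cover q) => [Bq|[Cq|Dq]].
  - rewrite epsB //; case: (pselect (dB' q)) => dq.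
      by right; left; exists q.
    by left; exists q.
  - by right; right; left; rewrite epsCD //; left.
  - by right; right; right; rewrite epsCD //; right.
have d12 p : Q1 p -> Q2 p -> False.
  case=> q [Bq nq] <- [r dr] /(can_inj cd1) e; apply: nq; by rewrite -e.
have d1C p : Q1 p -> C p -> False by move/Q1B; exact: disBC.
have d1D p : Q1 p -> D p -> False by move/Q1B; exact: disBD.
have d2C p : Q2 p -> C p -> False by move/Q2B; exact: disBC.
have d2D p : Q2 p -> D p -> False by move/Q2B; exact: disBD.
have sy (S T : set CC) : (forall p, S p -> T p -> False) -> forall p, T p -> S p -> False.
  by move=> H p a b; exact: H p b a.
have core (F E : set CC) z : clopen F -> clopen E -> F `<=` R -> E `<=` R ->
    (exists p, F p) -> (exists p, E p) -> R z -> ~ E z -> ~ F z -> ~ F (hi z) ->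
    (forall p, E p -> ~ F p) -> (forall p, E p -> ~ F (hi p)) ->
    exists2 g, G g & f g = h.
  move=> clF clE FR ER [pf Fpf] [pe Epe] Rz nEz nFz nFhz EF EhF.
  pose Ar := ~` (F `|` hi @^-1` F).
  have clAr : clopen Ar by apply: clC; apply: clopenU => //; exact: preimage_clopen.
  pose NR := ~` R.
  have clNR : clopen NR.
    have -> : NR = W by apply/seteqP; split => p; rewrite /NR /= NRW.
    exact: clW.
  have NRAr p : NR p -> Ar p.
    move=> nR [Fp|Fhp]; first by apply: nR; exact: FR.
    have e := hifix p nR; apply: (nR); apply: FR; move: Fhp.
    by rewrite /preimage /= e.
  have EAr p : E p -> Ar p by move=> Ep [Fp|Fhp]; [exact: EF Ep Fp| exact: EhF Ep Fhp].
  have [t Gt [st tWE]] := vig Ar (NR `|` E) NR clAr (clopenU clNR clE) clNR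
    (ex_intro _ pe (or_intror Epe))
    (ex_intro _ w (proj2 (NRW w) (conj Bw nw)))
    (conj (fun p (H : (NR `|` E) p) => match H with or_introl a => NRAr p a | or_intror b => EAr p b end)
          (fun (H : Ar `<=` NR `|` E) =>
             match H z (fun K => match K with or_introl a => nFz a | or_intror b => nFhz b end) with
             | or_introl a => a Rz | or_intror b => nEz b end))
    (conj NRAr (fun (H : Ar `<=` NR) => H pe (EAr pe Epe) (ER pe Epe))).
  have tfix := supp_fix st.
  have [ti [Gti _ ct1 ct2]] := subgroup_inv sG Gt.
  have tfix' p : ~ Ar p -> ti p = p by move=> nA; rewrite -{1}(tfix p nA) ct1.
  pose x := ti \o h \o t.
  pose y := ti \o hi \o t \o h.
  have Gx : G x by exact: G3.
  have Gy : G y by have -> : y = hmul h (ti \o hi \o t) by []; apply: (sM) => //; exact: G3.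
  have hxy : h = x \o y by apply: funext => p; rewrite /x /y /= ct2 ch2 ct1.
  have tNR p : NR p -> NR (t p) by move=> nR; apply: (tWE (t p)); exists p => //; left.
  have tE p : E p -> NR (t p) by move=> Ep; apply: (tWE (t p)); exists p => //; right.
  have [gx Ggx egx] : exists2 g, G g & f g = x.
    apply: (stepA x E) => //.
    - move=> p nR; rewrite /x /= (hfix (t p)); first by rewrite ct1.
      exact: tNR.
    - by case: (ER pe Epe) => q _ e; exists q; rewrite e.
    - by case: Rz => q _ e; exists q; rewrite e.
    - move=> p Ep; rewrite /x /= (hfix (t p)); first by rewrite ct1.
      exact: tE.
  have [gy Ggy egy] : exists2 g, G g & f g = y.
    apply: (stepA y F) => //.
    - move=> p nR; rewrite /y /= (hfix p nR) (hifix (t p)); first by rewrite ct1.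
      exact: tNR.
    - by case: (FR pf Fpf) => q _ e; exists q; rewrite e.
    - by case: Rz => q _ e; exists q; rewrite e.
    - move=> p Fp; rewrite /y /=.
      have nAhp : ~ Ar (h p) by move=> K; apply: K; right; rewrite /preimage /= ch1.
      by rewrite tfix // ch1 tfix' // => K; apply: K; left.
  exists (hmul gy gx); first exact: (sM).
  by rewrite (f_mul hf1 hf2) egx egy hxy.
have pick (Qa Qb Qk Ql : set CC) pa ek zl : clopen Qa -> clopen Qb -> clopen Qk ->
    Qa `<=` R -> Qk `<=` R -> Ql `<=` R ->
    Qa pa -> Qb (h pa) -> Qk ek -> Ql zl ->
    (forall p, Qk p -> Qa p -> False) -> (forall p, Qk p -> Qb p -> False) ->
    (forall p, Ql p -> Qa p -> False) -> (forall p, Ql p -> Qb p -> False) ->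
    (forall p, Qk p -> Ql p -> False) -> exists2 g, G g & f g = h.
  move=> ca cb ck aR kR lR apa bpa kek lzl ka kb la lb kl.
  apply: (core (Qa `&` h @^-1` Qb) Qk zl) => //.
  - by apply: clopenI => //; exact: preimage_clopen.
  - by move=> p [] /aR.
  - by exists pa.
  - by exists ek.
  - exact: lR.
  - by move=> K; exact: kl K lzl.
  - by case=> K _; exact: la lzl K.
  - by case=> _; rewrite /preimage /= ch2 => K; exact: lb lzl K.
  - by move=> p Kp [K _]; exact: ka Kp K.
  - by move=> p Kp [_]; rewrite /preimage /= ch2 => K; exact: kb Kp K.
pose pa := delta w.
have Q1pa : Q1 pa by exists w.
have [c0 Cc0] := KC'.2.1; have [d0 Dd0] := KD.2.1.
have [b1 Bb1] := KB.2.1.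
have Q2e : Q2 (delta (delta b1)) by exists (delta b1) => //; exists b1.
case: (Rblocks _ (hR _ (Q1R _ Q1pa))) => [j1|[j2|[j3|j4]]].
- exact: (pick Q1 Q1 Q2 C pa _ _ clQ1 clQ1 clQ2 Q1R Q2R CR Q1pa j1 Q2e Cc0
    (sy _ _ d12) (sy _ _ d12) (sy _ _ d1C) (sy _ _ d1C) d2C).
- exact: (pick Q1 Q2 C D pa _ _ clQ1 clQ2 KC'.1 Q1R CR DR Q1pa j2 Cc0 Dd0
    (sy _ _ d1C) (sy _ _ d2C) (sy _ _ d1D) (sy _ _ d2D) disCD).
- exact: (pick Q1 C Q2 D pa _ _ clQ1 KC'.1 clQ2 Q1R Q2R DR Q1pa j3 Q2e Dd0
    (sy _ _ d12) d2C (sy _ _ d1D) (sy _ _ disCD) d2D).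
- exact: (pick Q1 D Q2 C pa _ _ clQ1 KD.1 clQ2 Q1R Q2R CR Q1pa j4 Q2e Cc0
    (sy _ _ d12) d2D (sy _ _ d1C) disCD d2C).
Qed.

Unset Implicit Arguments. Set Strict Implicit.

Theorem lemma2p10
  (G : set (CC -> CC)) (B C D : set CC) (delta eps : CC -> CC)
  (f : (CC -> CC) -> (CC -> CC)) :
  is_subgroup G -> vigorous G -> gen_by_small_support G ->
  KC B -> KC C -> KC D ->
  B `&` C = set0 -> B `&` D = set0 -> C `&` D = set0 ->
  B `|` C `|` D = setT ->
  pstab G D delta -> delta @` B `<` B ->
  (forall p, B p -> eps p = delta p) ->
  (forall p, (C `|` D) p -> eps p = p) ->
  (forall g q, f g (eps q) = eps (g q)) ->
  (forall g p, ~ range eps p -> f g p = p) ->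
  [/\ forall g, G g -> pstab G (~` range eps) (f g),
      (forall g h, G g -> G h -> f g = f h -> g = h),
      (forall h, pstab G (~` range eps) h -> exists2 g, G g & f g = h) &
      (forall g h, G g -> G h -> f (hmul g h) = hmul (f g) (f h))].
Proof.
move=> sG vig gen KB KC' KD dBC dBD dCD cov pd dprop epsB epsCD hf1 hf2.
have [epsinj fG] := part1 sG vig gen KB KC' KD dBC dBD dCD cov pd dprop epsB epsCD hf1 hf2.
split.
- by move=> g Gg; split; [exact: fG | move=> p; exact: hf2].
- move=> g h _ _ e; apply: funext => q; apply: epsinj; by rewrite -!hf1 e.
- exact: (part3 sG vig gen KB KC' KD dBC dBD dCD cov pd dprop epsB epsCD hf1 hf2).
- by move=> g h _ _; exact: f_mul.
Qed.
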